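(* Let $X$ be a compact metrizable space, let $F_1^\bullet,\dots,F_N^\bullet$ be open subsets of $X$, and let $F_i^\circ\subset F_i^\bullet$ be open subsets with $\overline{F_i^\circ}\subset F_i^\bullet$ and $X=\bigcup_{i=1}^NF_i^\circ$. Let $\mathcal{I}$ be the set of nonempty subsets of $\{1,\dots,N\}$, partially ordered by inclusion, and order its elements as $I_1,\dots,I_M$ so that $I_k\subseteq I_l$ implies $k\le l$. For each $i$ choose open sets $$F_i^\circ=:G_i^1\sqsubset F_i^1\sqsubset G_i^2\sqsubset F_i^2\sqsubset\cdots\sqsubset G_i^M\sqsubset F_i^M:=F_i^\bullet,$$ where $A\sqsubset B$ means $\overline{A}\subset B$. For $I_k\in\mathcal{I}$ define $$F_{I_k}^\square:=\Big(\bigcap_{i\in I_k}F_i^k\Big)\setminus\Big(\bigcup_{i\notin I_k}\overline{G_i^k}\Big).$$ Then for all $I,J\in\mathcal{I}$, $\overline{F_I^\square}\cap\overline{F_J^\square}\ne\emptyset$ implies $I\subseteq J$ or $J\subseteq I$.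
   Context: All closures are taken in $X$. *)

(* Defs.v *)
From HB Require Import structures.
From mathcomp Require Import all_boot all_order all_algebra.
From mathcomp Require Import all_classical all_reals all_analysis.
Set Implicit Arguments. Unset Strict Implicit. Unset Printing Implicit Defensive.
Import Order.TTheory GRing.Theory Num.Theory.
Local Open Scope classical_set_scope.

Definition csub {X : topologicalType} (A B : set X) : Prop := closure A `<=` B.

(* F^square_{I_k} := (\bigcap_{i in I_k} F_i^k) \ (\bigcup_{i notin I_k} closure G_i^k),
   where the index k : 'I_M is 0-based and e k = I_k. *)
Definition Fsquare {X : topologicalType} {N M : nat}
  (e : 'I_M -> {set 'I_N}) (F G : 'I_N -> 'I_M -> set X) (k : 'I_M) : set X :=
  (\bigcap_(i in [set i | i \in e k]) F i k) `\`
  (\bigcup_(i in [set i | i \notin e k]) closure (G i k)).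

(* Main.v *)
Require Import Defs.
From HB Require Import structures.
From mathcomp Require Import all_boot all_order all_algebra.
From mathcomp Require Import all_classical all_reals all_analysis.
Local Open Scope classical_set_scope.
Set Implicit Arguments.

Lemma chain_mono (X : topologicalType) (N M : nat) (F G : 'I_N -> 'I_M -> set X) :
  (forall i k, csub (G i k) (F i k)) ->
  (forall i (k k' : 'I_M), val k' = (val k).+1 -> csub (F i k) (G i k')) ->
  forall i (a : 'I_M) n (b : 'I_M), val b = (val a + n)%N ->
  closure (G i a) `<=` closure (G i b).
Proof.
move=> HGF HFG i a; elim=> [|n IH] b Hb.
  by have -> : b = a by apply: val_inj; rewrite Hb addn0.
have Hlt : (val a + n < M)%N by apply: leq_trans (ltn_ord b); rewrite Hb addnS.
have /= := IH (Ordinal Hlt) erefl => H.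
move=> x /H Hx.
apply: subset_closure; apply: (HFG i (Ordinal Hlt) b); first by rewrite Hb addnS.
by apply: subset_closure; apply: HGF.
Qed.

Lemma key (X : topologicalType) (N M : nat)
  (e : 'I_M -> {set 'I_N}) (F G : 'I_N -> 'I_M -> set X) :
  (forall i k, open (G i k)) ->
  (forall i k, csub (G i k) (F i k)) ->
  (forall i (k k' : 'I_M), val k' = (val k).+1 -> csub (F i k) (G i k')) ->
  forall k l : 'I_M, (k < l)%N ->
    closure (Fsquare e F G k) `&` closure (Fsquare e F G l) !=set0 ->
    e k \subset e l.
Proof.
move=> Gop HGF HFG k l Hkl [x [Hxk Hxl]].
apply/fintype.subsetP => i Hik; apply: contraT => Hil.
have Hk1 : (val k).+1 < M by apply: leq_trans (ltn_ord l); rewrite ltnS.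
pose k' := Ordinal Hk1.
have HxF : closure (F i k) x.
  apply: closureS Hxk => y [Hy _]; exact: Hy.
have HxG : G i k' x by apply: (HFG i k k') => //.
have Hn : nbhs x (G i k') by apply: open_nbhs_nbhs; split.
have [y [[_ Hy2] Hy]] := Hxl _ Hn.
exfalso; apply: Hy2; exists i => //.
apply: (@chain_mono _ _ _ F G HGF HFG i k' (l - k.+1)%N l _ y (subset_closure Hy)).
by rewrite /= subnKC.
Qed.

Unset Implicit Arguments.

Theorem lemma11p5 (R : realType) (X : pseudoMetricType R)
  (N M : nat) (Fcirc Fbullet : 'I_N -> set X)
  (e : 'I_M -> {set 'I_N}) (F G : 'I_N -> 'I_M -> set X) :
  hausdorff_space X ->
  compact [set: X] ->
  (forall i, open (Fbullet i)) ->
  (forall i, open (Fcirc i)) ->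
  (forall i, Fcirc i `<=` Fbullet i) ->
  (forall i, closure (Fcirc i) `<=` Fbullet i) ->
  [set: X] = \bigcup_(i in [set: 'I_N]) Fcirc i ->
  (* e enumerates the nonempty subsets of {1..N} compatibly with inclusion *)
  injective e ->
  (forall k, e k != finset.set0) ->
  (forall I : {set 'I_N}, I != finset.set0 -> exists k, e k = I) ->
  (forall k l : 'I_M, e k \subset e l -> (k <= l)%N) ->
  (* the chain F_i^circ = G_i^1 ⊏ F_i^1 ⊏ G_i^2 ⊏ ... ⊏ G_i^M ⊏ F_i^M = F_i^bullet *)
  (forall i k, open (G i k)) ->
  (forall i k, open (F i k)) ->
  (forall i (k : 'I_M), val k = 0%N -> G i k = Fcirc i) ->
  (forall i (k : 'I_M), val k = M.-1 -> F i k = Fbullet i) ->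
  (forall i k, csub (G i k) (F i k)) ->
  (forall i (k k' : 'I_M), val k' = (val k).+1 -> csub (F i k) (G i k')) ->
  forall k l : 'I_M,
    closure (Fsquare e F G k) `&` closure (Fsquare e F G l) !=set0 ->
    e k \subset e l \/ e l \subset e k.
Proof.
move=> _ _ _ _ _ _ _ _ _ _ _ Gop _ _ _ HGF HFG k l H.
case: (ltngtP k l) => Hkl.
- by left; apply: (@key _ _ _ e F G Gop HGF HFG _ _ Hkl).
- by right; apply: (@key _ _ _ e F G Gop HGF HFG _ _ Hkl); rewrite setIC.
- by left; have -> : k = l by apply: val_inj.
Qed.
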